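(* Let $R$ be a commutative ring with $R=2R$, $I$ an ideal of $R$ and $n\ge2$. Let $P=R^{2n}$ with the form $\langle p,q\rangle=p^t\widetilde\psi_nq$, and $Q=R^2\oplus P=R^{2n+2}$ with the form $\langle x,y\rangle=x^t\widetilde\psi_{n+1}y$ (the induced form of $\mathbb{H}(R)\oplus P$). Then, as subgroups of $\mathrm{GL}_{2n+2}(R)$, $$\mathrm{ETrans}_{\mathrm{O}}(Q,IQ,\langle\,,\rangle_{\widetilde\psi_{n+1}})=\mathrm{EO}_{2n+2}(R,I).$$
   Context: $\widetilde\psi_m=\sum_{i=1}^m(e_{2i-1,2i}+e_{2i,2i-1})$. Let $\sigma$ be the permutation of $\{1,\dots,2m\}$ with $\sigma(2i)=2i-1$, $\sigma(2i-1)=2i$; for $z\in R$, $1\le i\ne j\le 2m$, $i\ne\sigma(j)$, $oe_{ij}(z)=1_{2m}+ze_{ij}-ze_{\sigma(j)\sigma(i)}$; $\mathrm{EO}_{2m}(R)$ is generated by all $oe_{ij}(z)$, $\mathrm{EO}_{2m}(I)$ by those with $z\in I$, and $\mathrm{EO}_{2m}(R,I)$ is the normal closure of $\mathrm{EO}_{2m}(I)$ in $\mathrm{EO}_{2m}(R)$. For a symmetric invertible $2n\times 2n$ matrix $\varphi$ and $q\in R^{2n}$ with $q^t\varphi q=0$, define the $(2n+2)\times(2n+2)$ block matrices (blocks of sizes $1,1,2n$) $\rho_\varphi(q)=\begin{pmatrix}1&0&0\\0&1&q^t\varphi\\-q&0&I_{2n}\end{pmatrix}$, $\mu_\varphi(q)=\begin{pmatrix}1&0&q^t\varphi\\0&1&0\\0&-q&I_{2n}\end{pmatrix}$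 (the elementary orthogonal transvections $(a,b,p)\mapsto(a,b+\langle p,q\rangle,p-aq)$ and $(a,b,p)\mapsto(a+\langle p,q\rangle,b,p-bq)$ of $Q=R^2\oplus R^{2n}$ with form $\widetilde\psi_1\perp\varphi$). $\mathrm{ETrans}_{\mathrm{O}}(Q,\langle\,,\rangle_{\widetilde\psi_1\perp\varphi})$ is generated by all $\rho_\varphi(q),\mu_\varphi(q)$; $\mathrm{ETrans}_{\mathrm{O}}(IQ,\ldots)$ by those with $q\in I^{2n}$; and $\mathrm{ETrans}_{\mathrm{O}}(Q,IQ,\langle\,,\rangle_{\widetilde\psi_1\perp\varphi})$ is the normal closure of the latter in the former. Here $\varphi=\widetilde\psi_n$, so $\widetilde\psi_1\perp\varphi=\widetilde\psi_{n+1}$. *)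

(* Defs.v *)
From HB Require Import structures.
From mathcomp Require Import all_boot all_order all_algebra.
Set Implicit Arguments. Unset Strict Implicit. Unset Printing Implicit Defensive.
Import Order.TTheory GRing.Theory Num.Theory.
Local Open Scope ring_scope.

(* Indices are 0-based: index a (0 <= a < 2m) stands for the paper's a+1. *)
Definition sig (a : nat) : nat := if odd a then a.-1 else a.+1.

Definition psi (R : comPzRingType) (m : nat) : 'M[R]_(m.*2) :=
  \matrix_(a, b) ((val b == sig (val a))%:R).

Definition is_ideal (R : comPzRingType) (I : R -> Prop) : Prop :=
  [/\ I 0, (forall x y, I x -> I y -> I (x + y)) & (forall r x, I x -> I (r * x))].

Inductive gen (R : comPzRingType) (N : nat) (S : 'M[R]_N -> Prop) : 'M[R]_N -> Prop :=
  | gen1 : gen S 1%:M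
  | genS x : S x -> gen S x
  | genM x y : gen S x -> gen S y -> gen S (x *m y)
  | genV x y : S x -> x *m y = 1%:M -> y *m x = 1%:M -> gen S y.

Definition ncl (R : comPzRingType) (N : nat) (G H : 'M[R]_N -> Prop) : 'M[R]_N -> Prop :=
  gen (fun x => exists g g' h,
        [/\ G g, g *m g' = 1%:M, g' *m g = 1%:M, H h & x = g *m h *m g']).

Definition oe (R : comPzRingType) (m : nat) (i j : 'I_(m.*2)) (z : R) : 'M[R]_(m.*2) :=
  \matrix_(a, b) ((a == b)%:R + z * ((a == i) && (b == j))%:R
                  - z * ((val a == sig (val j)) && (val b == sig (val i)))%:R).

Definition oe_gens (R : comPzRingType) (m : nat) (J : R -> Prop) : 'M[R]_(m.*2) -> Prop :=
  fun g => exists (i j : 'I_(m.*2)) (z : R),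
    [/\ i != j, val i != sig (val j), J z & g = oe i j z].

Definition EO (R : comPzRingType) (m : nat) : 'M[R]_(m.*2) -> Prop :=
  gen (@oe_gens R m (fun _ => True)).
Definition EO_I (R : comPzRingType) (m : nat) (I : R -> Prop) : 'M[R]_(m.*2) -> Prop :=
  gen (@oe_gens R m I).
Definition EO_rel (R : comPzRingType) (m : nat) (I : R -> Prop) : 'M[R]_(m.*2) -> Prop :=
  ncl (@EO R m) (@EO_I R m I).

Definition rho (R : comPzRingType) (n : nat) (q : 'cV[R]_(n.*2)) : 'M[R]_(n.+1.*2) :=
  block_mx (1%:M : 'M[R]_(1 + 1)) (col_mx (0 : 'M[R]_(1, n.*2)) (q^T *m psi R n))
           (row_mx (- q) (0 : 'M[R]_(n.*2, 1))) (1%:M : 'M[R]_(n.*2)).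

Definition mu (R : comPzRingType) (n : nat) (q : 'cV[R]_(n.*2)) : 'M[R]_(n.+1.*2) :=
  block_mx (1%:M : 'M[R]_(1 + 1)) (col_mx (q^T *m psi R n) (0 : 'M[R]_(1, n.*2)))
           (row_mx (0 : 'M[R]_(n.*2, 1)) (- q)) (1%:M : 'M[R]_(n.*2)).

Definition etrans_gens (R : comPzRingType) (n : nat) (J : R -> Prop) : 'M[R]_(n.+1.*2) -> Prop :=
  fun g => exists q : 'cV[R]_(n.*2),
    [/\ q^T *m psi R n *m q = 0, (forall k, J (q k 0)) & (g = rho q \/ g = mu q)].

Definition ETrans (R : comPzRingType) (n : nat) : 'M[R]_(n.+1.*2) -> Prop :=
  gen (@etrans_gens R n (fun _ => True)).
Definition ETrans_I (R : comPzRingType) (n : nat) (I : R -> Prop) : 'M[R]_(n.+1.*2) -> Prop :=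
  gen (@etrans_gens R n I).
Definition ETrans_rel (R : comPzRingType) (n : nat) (I : R -> Prop) : 'M[R]_(n.+1.*2) -> Prop :=
  ncl (@ETrans R n) (@ETrans_I R n I).

(* Main.v *)
Require Import Defs.
From HB Require Import structures.
From mathcomp Require Import all_boot all_order all_algebra.
From mathcomp Require Import ring zify.
Set Implicit Arguments. Unset Strict Implicit. Unset Printing Implicit Defensive.
Import Order.TTheory GRing.Theory Num.Theory.
Local Open Scope ring_scope.


Lemma sigK a : sig (sig a) = a.
Proof.
case: a => [|a] //; rewrite /sig /=.
by case: (boolP (odd a)) => h /=; rewrite ?h ?(negbTE h).
Qed.

Lemma sig_neq a : sig a != a.
Proof.
rewrite /sig; case: ifP => h; last by apply/eqP; lia.
by case: a h => // a _ /=; apply/eqP; lia.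
Qed.

Lemma sig_inj : injective sig.
Proof. by move=> a b e; rewrite -(sigK a) e sigK. Qed.

Lemma sigSS a : sig a.+2 = (sig a).+2.
Proof. by rewrite /sig /= negbK; case: a => [|a] //=; case: (odd a). Qed.

Lemma sig_lt m a : (a < m.*2)%N -> (sig a < m.*2)%N.
Proof.
rewrite /sig; case: ifP => ho ha; first by case: a ho ha => // a _ /ltnW.
have: (a.+1 <= m.*2)%N by [].
rewrite leq_eqVlt => /orP [/eqP e|//].
by move: (odd_double m); rewrite -e /= ho.
Qed.

Lemma sig_lt2 a : (a < 2)%N = (sig a < 2)%N.
Proof. by case: a => [|[|a]] //; rewrite sigSS. Qed.


Section Gen.
Variables (R : comPzRingType) (N : nat).
Implicit Types (S T G H : 'M[R]_N -> Prop) (x y g : 'M[R]_N).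

Definition invb x y := x *m y = 1%:M /\ y *m x = 1%:M.
Definition invertible S := forall x, S x -> exists y, invb x y.

Lemma gen_inv S : invertible S -> forall g, gen S g -> exists g', gen S g' /\ invb g g'.
Proof.
move=> hS g; elim=> {g}.
- exists 1%:M; split; [exact: gen1 | by rewrite /invb mul1mx].
- move=> x Sx; have [y [h1 h2]] := hS x Sx; exists y; split; [exact: genV Sx h1 h2 | by split].
- move=> x y _ [x' [gx' [hx1 hx2]]] _ [y' [gy' [hy1 hy2]]].
  exists (y' *m x'); split; first exact: genM.
  split; first by rewrite -mulmxA (mulmxA y) hy1 mul1mx hx1.
  by rewrite -mulmxA (mulmxA x') hx2 mul1mx hy2.
- move=> x y Sx h1 h2; exists x; split; [exact: genS | by split].
Qed.

Lemma inv_uniq x y y' : x *m y = 1%:M -> y' *m x = 1%:M -> y = y'.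
Proof. by move=> h1 h2; rewrite -[y]mul1mx -h2 -mulmxA h1 mulmx1. Qed.

Lemma gen_invP S : invertible S -> forall x y, gen S x -> x *m y = 1%:M -> gen S y.
Proof.
move=> hS x y gx hxy; have [x' [gx' [_ h2]]] := gen_inv hS gx.
by rewrite (inv_uniq hxy h2).
Qed.

Lemma gen_sub S T : invertible T -> (forall x, S x -> gen T x) ->
  forall g, gen S g -> gen T g.
Proof.
move=> hT hST g; elim=> {g}.
- exact: gen1.
- exact: hST.
- move=> x y _ gx _ gy; exact: genM.
- move=> x y Sx h1 _; exact: gen_invP hT _ _ (hST _ Sx) h1.
Qed.

Lemma gen_prod S (I : Type) (r : seq I) (F : I -> 'M[R]_N) :
  (forall i, gen S (F i)) -> gen S (\big[@mulmx R N N N/1%:M]_(i <- r) F i).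
Proof.
move=> hF; elim: r => [|i r IH]; first by rewrite big_nil; exact: gen1.
by rewrite big_cons; apply: genM.
Qed.

Definition conjS G H x := exists g g' h,
  [/\ G g, g *m g' = 1%:M, g' *m g = 1%:M, H h & x = g *m h *m g'].

Lemma conjS_conj G H : (forall x y, G x -> G y -> G (x *m y)) ->
  forall x k k', conjS G H x -> G k -> k *m k' = 1%:M -> k' *m k = 1%:M ->
  conjS G H (k *m x *m k').
Proof.
move=> hG x k k' [g [g' [h [Gg h1 h2 Hh ->]]]] Gk hk1 hk2.
exists (k *m g), (g' *m k'), h; split => //; first exact: hG.
- by rewrite -mulmxA (mulmxA g) h1 mul1mx.
- by rewrite -mulmxA (mulmxA k') hk2 mul1mx.
- by rewrite !mulmxA.
Qed.

Lemma ncl_conj G H : (forall x y, G x -> G y -> G (x *m y)) ->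
  forall y, ncl G H y -> forall k k', G k -> k *m k' = 1%:M -> k' *m k = 1%:M ->
  ncl G H (k *m y *m k').
Proof.
move=> hG y; elim=> {y}.
- by move=> k k' _ hk _; rewrite mulmx1 hk; exact: gen1.
- move=> x Sx k k' Gk h1 h2; apply: genS; exact: conjS_conj.
- move=> x y _ IHx _ IHy k k' Gk h1 h2.
  have -> : k *m (x *m y) *m k' = (k *m x *m k') *m (k *m y *m k').
    by rewrite -!mulmxA (mulmxA k' k) h2 mul1mx.
  by apply: genM; [exact: IHx | exact: IHy].
- move=> x y Sx hxy hyx k k' Gk h1 h2.
  apply: (@genV _ _ _ (k *m x *m k')); first exact: conjS_conj.
  + by rewrite -!mulmxA (mulmxA k' k) h2 mul1mx (mulmxA x) hxy mul1mx.
  + by rewrite -!mulmxA (mulmxA k' k) h2 mul1mx (mulmxA y) hyx mul1mx.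
Qed.

Lemma ncl_H G H h : G 1%:M -> H h -> ncl G H h.
Proof.
move=> G1 Hh; apply: genS; exists 1%:M, 1%:M, h; split => //; rewrite ?mulmx1 ?mul1mx //.
Qed.

Lemma conjS_inv G H : (forall h, H h -> exists h', invb h h') -> invertible (conjS G H).
Proof.
move=> hH x [g [g' [h [Gg h1 h2 Hh ->]]]]; have [h' [e1 e2]] := hH h Hh.
exists (g *m h' *m g'); split.
- by rewrite -!mulmxA (mulmxA g' g) h2 mul1mx (mulmxA h) e1 mul1mx.
- by rewrite -!mulmxA (mulmxA g' g) h2 mul1mx (mulmxA h') e2 mul1mx.
Qed.

End Gen.


Section Oe.
Variables (R : comPzRingType) (m : nat).
Local Notation M := 'M[R]_(m.*2).
Implicit Types (i j k l : 'I_(m.*2)).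

Definition sgo i : 'I_(m.*2) := Ordinal (sig_lt (ltn_ord i)).
Lemma sgoK : involutive sgo.
Proof. by move=> i; apply: val_inj; rewrite /= sigK. Qed.
Lemma sgo_inj : injective sgo.
Proof. exact: inv_inj sgoK. Qed.
Lemma sgo_eq i j : (sgo i == sgo j) = (i == j).
Proof. by rewrite (inj_eq sgo_inj). Qed.
Lemma sgo_neq i : (sgo i == i) = false.
Proof. by apply/negbTE; rewrite -val_eqE /= sig_neq. Qed.
Lemma sgo_neq' i : (i == sgo i) = false.
Proof. by rewrite eq_sym sgo_neq. Qed.

Definition E i j : M := delta_mx i j.
Definition Dm i j : M := E i j - E (sgo j) (sgo i).

Lemma oeE i j z : oe i j z = 1%:M + z *: Dm i j.
Proof.
apply/matrixP => a b; rewrite !mxE /=.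
rewrite -!val_eqE /=.
ring.
Qed.

End Oe.


Lemma comm_id (R : comPzRingType) N (A B : 'M[R]_N) :
  A *m A = 0 -> B *m B = 0 -> A *m B *m A = 0 -> B *m A *m B = 0 ->
  (1%:M + A) *m (1%:M + B) *m (1%:M - A) *m (1%:M - B) = 1%:M + A *m B - B *m A.
Proof.
move=> hAA hBB hABA hBAB.
have s1 : (1%:M + A) *m (1%:M + B) = 1%:M + A + B + A *m B.
  rewrite mulmxDl !mulmxDr !mul1mx !mulmx1.
  move: (A *m B) => X; apply/matrixP => a b; rewrite !mxE; ring.
have s2 : (1%:M + A + B + A *m B) *m (1%:M - A) = 1%:M + B + A *m B - B *m A.
  rewrite !mulmxDl !mulmxBr !mul1mx !mulmx1 hAA hABA.
  move: (A *m B) (B *m A) => X Y; apply/matrixP => a b; rewrite !mxE; ring.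
have s3 : (1%:M + B + A *m B - B *m A) *m (1%:M - B) = 1%:M + A *m B - B *m A.
  rewrite !mulmxDl !mulmxBr !mulNmx !mul1mx !mulmx1 hBB -(mulmxA A) hBB mulmx0 hBAB.
  move: (A *m B) (B *m A) => X Y; apply/matrixP => a b; rewrite !mxE; ring.
by rewrite s1 s2 s3.
Qed.

Section Oe2.
Variables (R : comPzRingType) (m : nat).
Local Notation M := 'M[R]_(m.*2).
Implicit Types (i j k l : 'I_(m.*2)).

Lemma DD i j k l : Dm R i j *m Dm R k l =
  E R i l *+ (j == k) - E R i (sgo k) *+ (j == sgo l)
  - E R (sgo j) l *+ (sgo i == k) + E R (sgo j) (sgo k) *+ (sgo i == sgo l).
Proof.
rewrite /Dm mulmxBl !mulmxBr /E !mul_delta_mx_cond.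
apply/matrixP => a b; rewrite !mxE; ring.
Qed.

Lemma sgo_eqL i j : (sgo i == j) = (i == sgo j).
Proof. by rewrite -(sgo_eq i (sgo j)) sgoK. Qed.

Lemma DDs a b i j k l : (a *: Dm R i j) *m (b *: Dm R k l) = (a * b) *: (Dm R i j *m Dm R k l).
Proof. by rewrite -scalemxAl -scalemxAr scalerA. Qed.

Lemma oe_sym i j (z : R) : oe i j z = oe (sgo j) (sgo i) (- z).
Proof. rewrite !oeE /Dm !sgoK; apply/matrixP => a b; rewrite !mxE; ring. Qed.

Lemma oe_inv i j (z : R) : i != j -> i != sgo j -> oe i j z *m oe i j (- z) = 1%:M.
Proof.
move=> hij hisj.
rewrite !oeE mulmxDl !mulmxDr !mul1mx mulmx1 DDs DD.
rewrite sgo_neq' sgo_neq sgo_eq (negbTE hij) eq_sym (negbTE hij) /=.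
apply/matrixP => a b; rewrite !mxE; ring.
Qed.

Lemma oe_0 i j : oe i j (0 : R) = 1%:M.
Proof. by rewrite oeE scale0r addr0. Qed.

Lemma oe_comm i j k (a b : R) :
  i != j -> i != sgo j -> k != i -> k != sgo i -> k != j -> k != sgo j ->
  oe i k a *m oe k j b *m oe i k (- a) *m oe k j (- b) = oe i j (a * b).
Proof.
move=> hij hisj hki hksi hkj hksj.
have e1 : (i == k) = false by rewrite eq_sym (negbTE hki).
have e2 : (k == sgo i) = false by rewrite (negbTE hksi).
have e3 : (sgo i == k) = false by rewrite eq_sym (negbTE hksi).
have e4 : (k == sgo j) = false by rewrite (negbTE hksj).
have e5 : (sgo j == k) = false by rewrite eq_sym (negbTE hksj).
have e6 : (j == k) = false by rewrite eq_sym (negbTE hkj).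
have e7 : (k == j) = false by rewrite (negbTE hkj).
have e8 : (j == i) = false by rewrite eq_sym (negbTE hij).
have e9 : (k == i) = false by rewrite (negbTE hki).
have e10 : (sgo k == i) = false by rewrite sgo_eqL e2.
have e11 : (j == sgo k) = false by rewrite eq_sym sgo_eqL e4.
have e12 : (sgo i == sgo j) = false by rewrite sgo_eq (negbTE hij).
have e13 : (sgo i == sgo k) = false by rewrite sgo_eq e1.
have e14 : (sgo k == sgo j) = false by rewrite sgo_eq e7.
have e15 : (sgo i == j) = false by rewrite sgo_eqL (negbTE hisj).
rewrite !oeE.
have -> : - a *: Dm R i k = - (a *: Dm R i k) by rewrite scaleNr.
have -> : - b *: Dm R k j = - (b *: Dm R k j) by rewrite scaleNr.
rewrite comm_id.
- rewrite !DDs !DD; rewrite ?(eqxx, e1, e2, e3, e4, e5, e6, e7, e8, e9, e10, e11, e12, e13, e14, e15, sgo_eq, sgoK, sgo_neq, sgo_neq') /=.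
  rewrite /Dm; apply/matrixP => x y; rewrite !mxE; ring.
- rewrite DDs DD; rewrite ?(eqxx, e1, e2, e3, e4, e5, e6, e7, e8, e9, e10, e11, e12, e13, e14, e15, sgo_eq, sgoK, sgo_neq, sgo_neq') /=; apply/matrixP => x y; rewrite !mxE; ring.
- rewrite DDs DD; rewrite ?(eqxx, e1, e2, e3, e4, e5, e6, e7, e8, e9, e10, e11, e12, e13, e14, e15, sgo_eq, sgoK, sgo_neq, sgo_neq') /=; apply/matrixP => x y; rewrite !mxE; ring.
- rewrite DDs DD; rewrite ?(eqxx, e1, e2, e3, e4, e5, e6, e7, e8, e9, e10, e11, e12, e13, e14, e15, sgo_eq, sgoK, sgo_neq, sgo_neq') /= ?mulr0n ?mulr1n ?subr0 ?sub0r ?addr0 ?add0r.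
  rewrite -!scalemxAl -!scalemxAr /Dm /E ?mulmxBr ?mulmxBl !mul_delta_mx_cond ?(eqxx, e1, e2, e3, e4, e5, e6, e7, e8, e9, e10, e11, e12, e13, e14, e15, sgo_eq, sgoK, sgo_neq, sgo_neq') /=.
  apply/matrixP => x y; rewrite !mxE; ring.
- rewrite DDs DD; rewrite ?(eqxx, e1, e2, e3, e4, e5, e6, e7, e8, e9, e10, e11, e12, e13, e14, e15, sgo_eq, sgoK, sgo_neq, sgo_neq') /= ?mulr0n ?mulr1n ?subr0 ?sub0r ?addr0 ?add0r.
  rewrite -!scalemxAl -!scalemxAr /Dm /E ?mulmxBr ?mulmxBl !mul_delta_mx_cond ?(eqxx, e1, e2, e3, e4, e5, e6, e7, e8, e9, e10, e11, e12, e13, e14, e15, sgo_eq, sgoK, sgo_neq, sgo_neq') /=.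
  apply/matrixP => x y; rewrite !mxE; ring.
Qed.
End Oe2.


Section Rho.
Variables (R : comPzRingType) (n : nat).
Local Notation N := (n.+1.*2).
Local Notation Lo x := (@lshift 2 (n.*2) x).
Local Notation s k := (@rshift 2 (n.*2) k).
Local Notation EN := (@E R n.+1).
Implicit Types (u v x y : 'I_2) (k l : 'I_(n.*2)) (q : 'cV[R]_(n.*2)).

Lemma eqLL x y : (Lo x == Lo y :> 'I_N) = (x == y).
Proof. by rewrite -!val_eqE. Qed.
Lemma eqLs x k : (Lo x == s k :> 'I_N) = false.
Proof. rewrite -!val_eqE /=; apply/negbTE; have := ltn_ord x; lia. Qed.
Lemma eqsL x k : (s k == Lo x :> 'I_N) = false.
Proof. by rewrite eq_sym eqLs. Qed.
Lemma eqss k l : (s k == s l :> 'I_N) = (k == l).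
Proof. rewrite -!val_eqE /=; apply/eqP/eqP; lia. Qed.

Lemma sgo_s k : sgo (s k : 'I_N) = s (sgo k).
Proof. by apply: val_inj; rewrite /= !add2n sigSS. Qed.

Definition Nm u v q : 'M[R]_N :=
  \sum_k (q (sgo k) 0 *: EN (Lo v) (s k) - q k 0 *: EN (s k) (Lo u)).


Lemma Nm_entry u v q a b : Nm u v q a b = \sum_k (q (sgo k) 0 * ((a == Lo v) && (b == s k))%:R
   - q k 0 * ((a == s k) && (b == Lo u))%:R).
Proof. by rewrite summxE; apply: eq_bigr => k _; rewrite !mxE. Qed.

Lemma NmLL u v q x y : Nm u v q (Lo x) (Lo y) = 0.
Proof. by rewrite Nm_entry big1 // => k _; rewrite !eqLs !andbF /=; ring. Qed.

Lemma Nmss u v q k l : Nm u v q (s k) (s l) = 0.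
Proof. by rewrite Nm_entry big1 // => k' _; rewrite !eqsL !andbF /=; ring. Qed.

Lemma NmLs u v q x l : Nm u v q (Lo x) (s l) = q (sgo l) 0 * (x == v)%:R.
Proof.
rewrite Nm_entry (bigD1 l) //= big1 ?addr0.
  by rewrite eqLL eqss eqxx eqLs andbT /=; ring.
by move=> k hk; rewrite eqss [l == k]eq_sym (negbTE hk) eqLs andbF /=; ring.
Qed.

Lemma NmsL u v q k y : Nm u v q (s k) (Lo y) = - q k 0 * (y == u)%:R.
Proof.
rewrite Nm_entry (bigD1 k) //= big1 ?addr0.
  by rewrite eqLL eqss eqxx eqsL /=; ring.
by move=> l hl; rewrite eqss [k == l]eq_sym (negbTE hl) eqsL /=; ring.
Qed.


Definition T q q' := \sum_k q (sgo k) 0 * q' k 0.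

Lemma termprod u v q q' k l : u != v ->
  (q (sgo k) 0 *: EN (Lo v) (s k) - q k 0 *: EN (s k) (Lo u)) *m
  (q' (sgo l) 0 *: EN (Lo v) (s l) - q' l 0 *: EN (s l) (Lo u)) =
  (- (q (sgo k) 0 * q' l 0) * (k == l)%:R) *: EN (Lo v) (Lo u).
Proof.
move=> huv.
rewrite mulmxBl !mulmxBr -!scalemxAl -!scalemxAr /E !mul_delta_mx_cond.
rewrite !eqsL !eqLs eqLL eqss (negbTE huv) /=.
apply/matrixP => a b; rewrite !(mxE, mulmxnE); ring.
Qed.

Lemma NN u v q q' : u != v -> Nm u v q *m Nm u v q' = - T q q' *: EN (Lo v) (Lo u).
Proof.
move=> huv; rewrite /Nm mulmx_suml.
rewrite (eq_bigr (fun k => (- (q (sgo k) 0 * q' k 0)) *: EN (Lo v) (Lo u))).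
  by rewrite -scaler_suml /T -sumrN.
move=> k _; rewrite mulmx_sumr.
rewrite (eq_bigr (fun l => (- (q (sgo k) 0 * q' l 0) * (k == l)%:R) *: EN (Lo v) (Lo u))).
  2: by move=> l _; rewrite termprod.
rewrite -scaler_suml (bigD1 k) //= big1 ?eqxx ?addr0 ?mulr1 //.
by move=> l hl; rewrite eq_sym (negbTE hl) mulr0.
Qed.

Lemma NE u v q : u != v -> Nm u v q *m EN (Lo v) (Lo u) = 0.
Proof.
move=> huv; rewrite /Nm mulmx_suml big1 // => k _.
rewrite mulmxBl -!scalemxAl /E !mul_delta_mx_cond eqsL eqLL (negbTE huv) /=.
by rewrite !mulr0n !scaler0 subr0.
Qed.

Lemma EN_N u v q : u != v -> EN (Lo v) (Lo u) *m Nm u v q = 0.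
Proof.
move=> huv; rewrite /Nm mulmx_sumr big1 // => k _.
rewrite mulmxBr -!scalemxAr /E !mul_delta_mx_cond eqLs eqLL (negbTE huv) /=.
by rewrite !mulr0n !scaler0 subr0.
Qed.

Lemma EE u v : u != v -> EN (Lo v) (Lo u) *m EN (Lo v) (Lo u) = 0.
Proof. by move=> huv; rewrite /E mul_delta_mx_cond eqLL (negbTE huv) mulr0n. Qed.

Lemma Nm_add u v q q' : Nm u v (q + q') = Nm u v q + Nm u v q'.
Proof.
rewrite /Nm -big_split; apply: eq_bigr => k _.
apply/matrixP => a b; rewrite !mxE; ring.
Qed.

Lemma T_sym q q' : T q' q = T q q'.
Proof.
rewrite /T (reindex_inj (@sgo_inj n)); apply: eq_bigr => k _.
by rewrite sgoK mulrC.
Qed.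

Lemma T_add q q' q'' : T (q + q') q'' = T q q'' + T q' q''.
Proof. rewrite /T -big_split; apply: eq_bigr => k _; by rewrite !mxE mulrDl. Qed.

Lemma T_addr q q' q'' : T q'' (q + q') = T q'' q + T q'' q'.
Proof. by rewrite T_sym T_add !(T_sym q''). Qed.


Definition cc (hh : R) q := - hh * T q q.

Lemma cc_add hh q q' : hh * 2 = 1 -> cc hh (q + q') = cc hh q + cc hh q' - T q q'.
Proof.
move=> h2; rewrite /cc T_add !T_addr (T_sym q q').
move: (T q q) (T q q') (T q' q') => a b c.
rewrite -[X in _ - X]mul1r -h2; ring.
Qed.

Definition Y hh u v q : 'M[R]_N := 1%:M + Nm u v q + cc hh q *: EN (Lo v) (Lo u).

Lemma Yhom hh u v q q' : hh * 2 = 1 -> u != v -> Y hh u v q *m Y hh u v q' = Y hh u v (q + q').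
Proof.
move=> h2 huv; rewrite /Y !mulmxDl !mulmxDr !mul1mx !mulmx1 -!scalemxAl -!scalemxAr.
rewrite NN // NE // EN_N // EE // !scaler0 Nm_add cc_add //.
move: (Nm u v q) (Nm u v q') => X X'; apply/matrixP => a b; rewrite !(mxE, mulmxnE); ring.
Qed.

Lemma Y0 hh u v : Y hh u v 0 = 1%:M.
Proof.
have hN : Nm u v 0 = 0.
  by rewrite /Nm big1 // => k _; rewrite !mxE !scale0r subr0.
have hT : T 0 0 = 0 by rewrite /T big1 // => k _; rewrite !mxE mul0r.
by rewrite /Y hN /cc hT mulr0 scale0r !addr0.
Qed.

Lemma Y_prod hh u v q : hh * 2 = 1 -> u != v ->
  Y hh u v q = \big[@mulmx R N N N/1%:M]_(m < n.*2) Y hh u v (q m 0 *: delta_mx m 0).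
Proof.
move=> h2 huv.
have hq : q = \sum_(m < n.*2) q m 0 *: delta_mx m 0.
  rewrite {1}(matrix_sum_delta q); apply: eq_bigr => m _; by rewrite big_ord1.
rewrite {1}hq (big_morph (Y hh u v) (id1 := 1%:M) (op1 := @mulmx R N N N)) //; last exact: Y0.
by move=> x y; rewrite Yhom.
Qed.


Lemma sgoLo u v : u != v -> sgo (Lo v : 'I_N) = Lo u.
Proof.
move=> huv; apply: val_inj => /=; move: huv.
by case: u => [[|[|?]] ?] //; case: v => [[|[|?]] ?].
Qed.

Lemma Y_single hh u v (z : R) m : u != v ->
  Y hh u v (z *: delta_mx m 0) = @oe R n.+1 (Lo v) (s (sgo m)) z.
Proof.
move=> huv.
have hN : Nm u v (z *: delta_mx m 0) = z *: EN (Lo v) (s (sgo m)) - z *: EN (s m) (Lo u).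
  rewrite /Nm sumrB (bigD1 (sgo m)) //= big1; last first.
    by move=> k hk; rewrite !mxE sgo_eqL (negbTE hk) /= mulr0 scale0r.
  rewrite (bigD1 m) //= [X in _ - (_ + X)]big1; last first.
    by move=> k hk; rewrite !mxE (negbTE hk) /= mulr0 scale0r.
  by rewrite !mxE sgoK !eqxx /= !mulr1 !addr0.
have hT : T (z *: delta_mx m 0) (z *: delta_mx m 0) = 0.
  rewrite /T big1 // => k _; rewrite !mxE.
  case: (eqVneq k m) => [->|hk]; first by rewrite sgo_neq /=; ring.
  by rewrite /=; ring.
rewrite /Y hN /cc hT mulr0 scale0r addr0 oeE /Dm sgo_s sgoK (sgoLo huv).
by rewrite scalerBr addrA.
Qed.


Lemma qpsi q b : (q^T *m psi R n) 0 b = q (sgo b) 0.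
Proof.
rewrite !mxE (bigD1 (sgo b)) //= big1 ?addr0.
  by rewrite !mxE /= sigK eqxx mulr1.
move=> a ha; rewrite !mxE.
have -> : (val b == sig (val a)) = false.
  apply/negbTE; apply: contra ha => /eqP e; apply/eqP/val_inj => /=; by rewrite e sigK.
by rewrite mulr0.
Qed.

Lemma iso_T q : q^T *m psi R n *m q = 0 -> T q q = 0.
Proof.
move=> h; have := congr1 (fun M : 'M[R]_1 => M 0 0) h; rewrite /= !mxE => <-.
by apply: eq_bigr => k _; rewrite qpsi.
Qed.

Section B.
Variables (A : 'M[R]_(1+1)) (B : 'M[R]_(1+1, n.*2)) (C : 'M[R]_(n.*2, 1+1)) (D : 'M[R]_(n.*2)).
Lemma bEul x y : @fun_of_matrix R N N (block_mx A B C D) (Lo x) (Lo y) = A x y.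
Proof. exact: block_mxEul. Qed.
Lemma bEur x l : @fun_of_matrix R N N (block_mx A B C D) (Lo x) (s l) = B x l.
Proof. exact: block_mxEur. Qed.
Lemma bEdl k y : @fun_of_matrix R N N (block_mx A B C D) (s k) (Lo y) = C k y.
Proof. exact: block_mxEdl. Qed.
Lemma bEdr k l : @fun_of_matrix R N N (block_mx A B C D) (s k) (s l) = D k l.
Proof. exact: block_mxEdr. Qed.
End B.

Definition o0 : 'I_2 := ord0.
Definition o1 : 'I_2 := ord_max.

Lemma rho_Y hh q : q^T *m psi R n *m q = 0 -> rho q = Y hh o0 o1 q.
Proof.
move=> hq; have hc : cc hh q = 0 by rewrite /cc iso_T // mulr0.
apply/matrixP; rewrite /eqrel.
change (forall (a b : 'I_((1+1) + n.*2)), rho q a b = Y hh o0 o1 q a b).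
move=> a b; rewrite /rho /Y hc scale0r addr0.
case: (split_ordP a) => a' ->; case: (split_ordP b) => b' ->.
- by rewrite bEul !mxE NmLL eqLL addr0.
- rewrite bEur !mxE NmLs eqLs.
  by case: (split_ordP a') => x ->; rewrite (ord1 x) ?qpsi ?mxE -?val_eqE /=; ring.
- rewrite bEdl !mxE NmsL eqsL.
  by case: (split_ordP b') => x ->; rewrite (ord1 x) ?mxE -?val_eqE /=; ring.
- by rewrite bEdr !mxE Nmss eqss addr0.
Qed.

Lemma mu_Y hh q : q^T *m psi R n *m q = 0 -> mu q = Y hh o1 o0 q.
Proof.
move=> hq; have hc : cc hh q = 0 by rewrite /cc iso_T // mulr0.
apply/matrixP; rewrite /eqrel.
change (forall (a b : 'I_((1+1) + n.*2)), mu q a b = Y hh o1 o0 q a b).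
move=> a b; rewrite /mu /Y hc scale0r addr0.
case: (split_ordP a) => a' ->; case: (split_ordP b) => b' ->.
- by rewrite bEul !mxE NmLL eqLL addr0.
- rewrite bEur !mxE NmLs eqLs.
  by case: (split_ordP a') => x ->; rewrite (ord1 x) ?qpsi ?mxE -?val_eqE /=; ring.
- rewrite bEdl !mxE NmsL eqsL.
  by case: (split_ordP b') => x ->; rewrite (ord1 x) ?mxE -?val_eqE /=; ring.
- by rewrite bEdr !mxE Nmss eqss addr0.
Qed.

End Rho.


Section Fin.
Variables (R : comPzRingType) (n : nat).
Local Notation N := (n.+1.*2).
Local Notation Lo x := (@lshift 2 (n.*2) x).
Local Notation s k := (@rshift 2 (n.*2) k).
Local Notation EN := (@E R n.+1).
Local Notation OE := (@oe R n.+1).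
Local Notation dv z m := (z *: (delta_mx m 0 : 'cV[R]_(n.*2))).
Local Notation TT := (@T R n).
Implicit Types (u v x y : 'I_2) (k l : 'I_(n.*2)) (q : 'cV[R]_(n.*2)).

Lemma T_iso q : TT q q = 0 -> q^T *m psi R n *m q = 0.
Proof.
move=> h; apply/matrixP => a b; rewrite (ord1 a) (ord1 b) [RHS]mxE -h mxE.
by apply: eq_bigr => k _; rewrite qpsi.
Qed.

Lemma T_single (z : R) (m : 'I_(n.*2)) : TT (dv z m) (dv z m) = 0.
Proof.
rewrite /T big1 // => k _; rewrite !mxE.
case: (eqVneq k m) => [->|hk]; first by rewrite sgo_neq /=; ring.
by rewrite /=; ring.
Qed.

Lemma entJ (J : R -> Prop) (z : R) (m : 'I_(n.*2)) : J 0 -> J z -> forall k, J ((dv z m) k 0).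
Proof. by move=> J0 Jz k; rewrite !mxE; case: (k == m) => /=; rewrite ?mulr1 ?mulr0. Qed.

Lemma o01 : o0 != o1. Proof. by []. Qed.
Lemma o10 : o1 != o0. Proof. by []. Qed.

Lemma oe_L1 (hh : R) (J : R -> Prop) k (z : R) : hh * 2 = 1 -> J 0 -> J z ->
  etrans_gens J (OE (Lo o1) (s k) z).
Proof.
move=> h2 J0 Jz; exists (dv z (sgo k)); split.
- exact/T_iso/T_single.
- exact: entJ.
- left; rewrite (rho_Y hh (T_iso (T_single _ _))) Y_single ?sgoK //.
Qed.

Lemma oe_L0 (hh : R) (J : R -> Prop) k (z : R) : hh * 2 = 1 -> J 0 -> J z ->
  etrans_gens J (OE (Lo o0) (s k) z).
Proof.
move=> h2 J0 Jz; exists (dv z (sgo k)); split.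
- exact/T_iso/T_single.
- exact: entJ.
- right; rewrite (mu_Y hh (T_iso (T_single _ _))) Y_single ?sgoK //.
Qed.

Lemma I2_cases v : v = o0 \/ v = o1.
Proof.
case: v => [[|[|?]] hv]; [left|right|by []]; exact: val_inj.
Qed.

Lemma oe_Lgen (hh : R) (J : R -> Prop) v k (z : R) : hh * 2 = 1 -> J 0 -> J z ->
  etrans_gens J (OE (Lo v) (s k) z).
Proof. by case: (I2_cases v) => ->; [apply: oe_L0 | apply: oe_L1]. Qed.

Lemma oe_sgen (hh : R) (J : R -> Prop) v k (z : R) : hh * 2 = 1 -> J 0 -> J (- z) ->
  etrans_gens J (OE (s k) (Lo v) z).
Proof.
move=> h2 J0 Jz; rewrite oe_sym sgo_s.
have [u ->] : exists u, sgo (Lo v : 'I_N) = Lo u.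
  by case: (I2_cases v) => ->; [exists o1 | exists o0]; apply: val_inj.
exact: oe_Lgen h2 J0 Jz.
Qed.

Lemma idx_cases (i : 'I_N) : (exists x, i = Lo x) \/ (exists k, i = s k).
Proof.
case: (split_ordP (i : 'I_((1+1) + n.*2))) => [x e|k e]; [left; by exists x | right; by exists k].
Qed.

Lemma oe_comm_s k l (z : R) : s k != s l -> s k != sgo (s l :> 'I_N) ->
  OE (s k) (s l) z = OE (s k) (Lo o0) z *m OE (Lo o0) (s l) 1
     *m OE (s k) (Lo o0) (- z) *m OE (Lo o0) (s l) (- 1).
Proof.
move=> h1 h2; rewrite oe_comm ?mulr1 // ?sgo_s ?eqLs //.
Qed.


Lemma valcond v (m : 'I_(n.*2)) : val (Lo v : 'I_N) != sig (val (s (sgo m) : 'I_N)).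
Proof. rewrite /= add2n sigSS; apply/eqP => e; have := ltn_ord v; rewrite e; lia. Qed.

Lemma etrans_oe (S : 'M[R]_N -> Prop) (J : R -> Prop) (hh : R) : hh * 2 = 1 ->
  (forall (i j : 'I_N) (z : R), i != j -> val i != sig (val j) -> J z -> gen S (OE i j z)) ->
  forall g, etrans_gens J g -> gen S g.
Proof.
move=> h2 hS g [q [iso hJ [->|->]]].
- rewrite (rho_Y hh iso) Y_prod //; apply: gen_prod => m; rewrite Y_single //.
  by apply: hS; [rewrite eqLs | exact: valcond | exact: hJ].
- rewrite (mu_Y hh iso) Y_prod //; apply: gen_prod => m; rewrite Y_single //.
  by apply: hS; [rewrite eqLs | exact: valcond | exact: hJ].
Qed.

Lemma oe_into (P : 'M[R]_N -> Prop) (J : R -> Prop) (hh : R) : hh * 2 = 1 ->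
  J 0 -> (forall z, J z -> J (- z)) -> (forall g, etrans_gens J g -> P g) ->
  (forall k l (z : R), J z -> s k != s l -> s k != sgo (s l :> 'I_N) -> P (OE (s k) (s l) z)) ->
  forall (i j : 'I_N) (z : R), i != j -> val i != sig (val j) -> J z -> P (OE i j z).
Proof.
move=> h2 J0 JN hE hS i j z hij hsij Jz.
have hij' : i != sgo j by apply: contra hsij => /eqP ->.
move: hij hsij hij'.
case: (idx_cases i) => [[x ->]|[k ->]]; case: (idx_cases j) => [[y ->]|[l ->]] => hij hsij hij'.
- exfalso; move: hij hsij; rewrite -val_eqE /=.
  by case: (I2_cases x) => ->; case: (I2_cases y) => ->.
- by apply: hE; apply: oe_Lgen h2 J0 Jz.
- by apply: hE; apply: oe_sgen h2 J0 (JN _ Jz).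
- exact: hS.
Qed.

End Fin.


Lemma valcond' (n : nat) (v : 'I_2) (l : 'I_(n.*2)) :
  val (@lshift 2 (n.*2) v : 'I_(n.+1.*2)) != sig (val (@rshift 2 (n.*2) l : 'I_(n.+1.*2))).
Proof. by have := valcond v (sgo l); rewrite sgoK. Qed.

Theorem mainTheorem9 (R : comPzRingType) (I : R -> Prop) (n : nat)
  (h2R : forall r : R, exists s : R, r = 2 * s)
  (hI : is_ideal I) (hn : (2 <= n)%N) :
  forall g : 'M[R]_(n.+1.*2), @ETrans_rel R n I g <-> @EO_rel R n.+1 I g.
Proof.
have [hh h2] : exists hh : R, hh * 2 = 1.
  by have [t ht] := h2R 1; exists t; rewrite mulrC -ht.
case: hI => I0 IA IM.
have IN : forall z, I z -> I (- z) by move=> z Iz; rewrite -mulN1r; apply: IM.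
have invO : forall J, invertible (@oe_gens R n.+1 J).
  move=> J x [i [j [z [hij hsij _ ->]]]]; exists (oe i j (- z)); split.
    exact: oe_inv.
  by rewrite -{2}(opprK z); apply: oe_inv.
have oeEO : forall i j (z : R), i != j -> val i != sig (val j) ->
    gen (@oe_gens R n.+1 (fun _ => True)) (oe i j z).
  by move=> i j z hij hsij; apply: genS; exists i, j, z.
have ETrans_EO : forall x, @ETrans R n x -> @EO R n.+1 x.
  rewrite /ETrans /EO; apply: gen_sub (invO _) _ => x hx.
  exact: (etrans_oe h2 (fun i j z hij hsij _ => oeEO i j z hij hsij) hx).
have invE : forall J, invertible (@etrans_gens R n J).
  move=> J x hx.
  have gx := etrans_oe h2 (fun i j z hij hsij _ => oeEO i j z hij hsij) hx.
  by have [x' [_ hinv]] := gen_inv (invO _) gx; exists x'.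
have EO_ETrans : forall x, @EO R n.+1 x -> @ETrans R n x.
  rewrite /EO /ETrans; apply: gen_sub (invE _) _ => x [i [j [z [hij hsij _ ->]]]].
  apply: (oe_into (P := gen (etrans_gens (fun _ => True))) (J := fun _ => True) h2 _ _ _ _ hij hsij) => //.
    by move=> g' hg; apply: genS.
  move=> k l z' _ h1 h3; rewrite oe_comm_s //.
  repeat apply: genM; apply: genS.
  - exact: oe_sgen h2 _ _.
  - exact: oe_Lgen h2 _ _.
  - exact: oe_sgen h2 _ _.
  - exact: oe_Lgen h2 _ _.
have ETr1 : forall v l (z : R), @ETrans R n (@oe R n.+1 (@lshift 2 (n.*2) v) (@rshift 2 (n.*2) l) z).
  by move=> v l z; apply: genS; exact: oe_Lgen h2 _ _.
have EOI_rel : forall x, @oe_gens R n.+1 I x -> @ETrans_rel R n I x.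
  move=> x [i [j [z [hij hsij Iz ->]]]].
  apply: (oe_into (P := @ETrans_rel R n I) h2 I0 IN _ _ hij hsij Iz).
    by move=> g' hg; apply: ncl_H; [exact: gen1 | exact: genS].
  move=> k l z' Iz' h1 h3; rewrite oe_comm_s //.
  rewrite -!mulmxA [X in _ *m X]mulmxA.
  apply: genM.
    by apply: ncl_H; [exact: gen1 | apply: genS; apply: oe_sgen; [exact: h2 | exact: I0 | exact: IN _ Iz']].
  apply: genS; do 3 eexists; split; last reflexivity.
  - exact: ETr1.
  - by apply: oe_inv; [rewrite eqLs | exact: valcond'].
  - by rewrite -{2}(opprK 1); apply: oe_inv; [rewrite eqLs | exact: valcond'].
  - by apply: genS; apply: oe_sgen; [exact: h2 | exact: I0 | rewrite opprK].
move=> g; split.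
- rewrite /ETrans_rel /EO_rel /ncl; apply: gen_sub.
    apply: (conjS_inv (G := @EO R n.+1) (H := @EO_I R n.+1 I)) => h hh'.
    by have [h' [_ hi]] := gen_inv (invO _) hh'; exists h'.
  move=> x [g0 [g0' [h [Gg e1 e2 Hh ->]]]].
  apply: (ncl_conj (G := @EO R n.+1)) => //; first by move=> ? ? ? ?; exact: genM.
  + move: Hh; rewrite /ETrans_I; apply: gen_sub.
      apply: (conjS_inv (G := @EO R n.+1) (H := @EO_I R n.+1 I)) => h' hh'.
      by have [h'' [_ hi]] := gen_inv (invO _) hh'; exists h''.
    move=> y hy; apply: (etrans_oe h2 _ hy) => i j z hij hsij Iz.
    by apply: ncl_H; [exact: gen1 | apply: genS; exists i, j, z].
  + exact: ETrans_EO.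
- rewrite /ETrans_rel /EO_rel /ncl; apply: gen_sub.
    apply: (conjS_inv (G := @ETrans R n) (H := @ETrans_I R n I)) => h hh'.
    by have [h' [_ hi]] := gen_inv (invE _) hh'; exists h'.
  move=> x [g0 [g0' [h [Gg e1 e2 Hh ->]]]].
  apply: (ncl_conj (G := @ETrans R n)) => //; first by move=> ? ? ? ?; exact: genM.
  + move: Hh; rewrite /EO_I; apply: gen_sub.
      apply: (conjS_inv (G := @ETrans R n) (H := @ETrans_I R n I)) => h' hh'.
      by have [h'' [_ hi]] := gen_inv (invE _) hh'; exists h''.
    exact: EOI_rel.
  + exact: EO_ETrans.
Qed.
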